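(* Let $d>0$, let $\mathcal{S}$ be the 4-PAM constellation labeled by any Gray labeling, and let $\mathcal{B}\subset\{0,1\}^{2N}$ be a binary linear code with at least two codewords that contains codewords $\boldsymbol{b}'',\boldsymbol{b}'''$ such that $b''_1[k]=1$ for all $k$ and $b'''_2[k]=1$ for all $k$. Then $\mathsf{L}(\mathcal{B})=0$.
   Context: $\mathcal{S}=\{s_1,s_2,s_3,s_4\}$ with $s_1=-3d$, $s_2=-d$, $s_3=d$, $s_4=3d$. A labeling is a bijection $\Phi_{\mathcal{S}}:\{0,1\}^2\to\mathcal{S}$, described by $\boldsymbol{q}=[q_1,\dots,q_4]$ where $q_i$ is the integer whose two-bit representation $[b_1,b_2]$ (most significant bit first) is $\Phi_{\mathcal{S}}^{-1}(s_i)$; the Gray labelings are $[0,1,3,2]$, $[0,2,3,1]$, $[1,0,2,3]$, $[2,0,1,3]$. A codeword of $\mathcal{B}$ is written $\boldsymbol{b}=[\boldsymbol{b}[1],\dots,\boldsymbol{b}[N]]$ with $\boldsymbol{b}[k]=[b_1[k],b_2[k]]$, and the CM code is $\mathcal{X}=\{[\Phi_{\mathcal{S}}(\boldsymbol{b}[1]),\dots,\Phi_{\mathcal{S}}(\boldsymbol{b}[N])]:\boldsymbol{b}\in\mathcal{B}\}$. For $\boldsymbol{x},\hat{\boldsymbol{x}}\in\mathcal{S}^N$ and each $k$ with $x[k]\neq\hat{x}[k]$: $\mu^{\mathcal{X}}_k=\sigma^{2,\mathcal{X}}_k=(x[k]-\hat{x}[k])^2/(4d^2)$; $\mu^{\mathcal{B}}_k=\sigma^{2,\mathcal{B}}_k=(x[k]-\hat{x}[k])^2/(4d^2)$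 except that if $\{x[k],\hat{x}[k]\}=\{s_1,s_4\}$ then $\mu^{\mathcal{B}}_k=3$, $\sigma^{2,\mathcal{B}}_k=1$. Summing over $k$ with $x[k]\neq\hat{x}[k]$, $a^{\mathcal{X}}(\boldsymbol{x},\hat{\boldsymbol{x}})=\sum_k\mu^{\mathcal{X}}_k/\sqrt{\sum_k\sigma^{2,\mathcal{X}}_k}$ and $a^{\mathcal{B}}(\boldsymbol{x},\hat{\boldsymbol{x}})=\sum_k\mu^{\mathcal{B}}_k/\sqrt{\sum_k\sigma^{2,\mathcal{B}}_k}$ (normalized distances of the symbol-wise ML decoder and of the bit-wise max-log decoder under the zero-crossing approximation). The asymptotic loss of the code is $\mathsf{L}(\mathcal{B})=20\log_{10}\Big(\min_{\boldsymbol{x}\neq\hat{\boldsymbol{x}}\in\mathcal{X}}a^{\mathcal{X}}(\boldsymbol{x},\hat{\boldsymbol{x}})\big/\min_{\boldsymbol{x}\neq\hat{\boldsymbol{x}}\in\mathcal{X}}a^{\mathcal{B}}(\boldsymbol{x},\hat{\boldsymbol{x}})\Big)$ dB. *)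

(* Defs.v *)
From HB Require Import structures.
From mathcomp Require Import all_boot all_order all_algebra.
From mathcomp Require Import all_classical all_reals all_analysis.
Set Implicit Arguments. Unset Strict Implicit. Unset Printing Implicit Defensive.
Import Order.TTheory GRing.Theory Num.Theory.
Local Open Scope classical_set_scope.
Local Open Scope ring_scope.

Section Defs.
Variable R : realType.

(* 4-PAM constellation, 0-indexed: s_0 = -3d, s_1 = -d, s_2 = d, s_3 = 3d
   (the paper's s_1..s_4). *)
Definition pam (d : R) (i : nat) : R := (2 * i%:R - 3) * d.

Definition gray_labelings : seq (seq nat) :=
  [:: [:: 0; 1; 3; 2]; [:: 0; 2; 3; 1]; [:: 1; 0; 2; 3]; [:: 2; 0; 1; 3]]%N.

(* Labeling Phi_S: the bit pair [b1,b2] (b1 most significant) is mapped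
   to s_i where q_i = 2 b1 + b2. *)
Definition Phi (q : seq nat) (d : R) (b : bool * bool) : R :=
  pam d (index (2 * nat_of_bool b.1 + nat_of_bool b.2)%N q).

(* Codewords of B: length-N sequences of bit pairs b[k] = [b1[k], b2[k]]. *)
Definition codeword (N : nat) := {ffun 'I_N -> bool * bool}.

Definition binary_linear (N : nat) (B : {set codeword N}) : Prop :=
  [ffun => (false, false)] \in B /\
  forall c c', c \in B -> c' \in B ->
    [ffun k => (((c k).1 (+) (c' k).1), ((c k).2 (+) (c' k).2))] \in B.

Definition CMcode (N : nat) (q : seq nat) (d : R) (B : {set codeword N})
  : set ('I_N -> R) :=
  [set x | exists2 c, c \in B & x = fun k => Phi q d (c k)].

Definition sqdist (d : R) (u v : R) : R := (u - v) ^+ 2 / (4 * d ^+ 2).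

Definition extreme_pair (d : R) (u v : R) : bool :=
  ((u == pam d 0) && (v == pam d 3)) || ((u == pam d 3) && (v == pam d 0)).

Definition muX (d : R) (u v : R) : R := sqdist d u v.
Definition sigma2X (d : R) (u v : R) : R := sqdist d u v.
Definition muB (d : R) (u v : R) : R :=
  if extreme_pair d u v then 3 else sqdist d u v.
Definition sigma2B (d : R) (u v : R) : R :=
  if extreme_pair d u v then 1 else sqdist d u v.

Definition aX (N : nat) (d : R) (x xh : 'I_N -> R) : R :=
  (\sum_(k | x k != xh k) muX d (x k) (xh k)) /
    Num.sqrt (\sum_(k | x k != xh k) sigma2X d (x k) (xh k)).

Definition aB (N : nat) (d : R) (x xh : 'I_N -> R) : R :=
  (\sum_(k | x k != xh k) muB d (x k) (xh k)) /
    Num.sqrt (\sum_(k | x k != xh k) sigma2B d (x k) (xh k)).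

Definition min_dist (N : nat) (X : set ('I_N -> R))
  (a : ('I_N -> R) -> ('I_N -> R) -> R) : R :=
  inf [set r | exists x xh, [/\ X x, X xh, x <> xh & r = a x xh]].

Definition log10 (x : R) : R := ln x / ln 10.

Definition loss (N : nat) (q : seq nat) (d : R) (B : {set codeword N}) : R :=
  let X := CMcode q d B in
  20 * log10 (min_dist X (@aX N d) / min_dist X (@aB N d)).

End Defs.

(* Main.v *)
Require Import Defs.
From HB Require Import structures.
From mathcomp Require Import all_boot all_order all_algebra.
From mathcomp Require Import all_classical all_reals all_analysis.
From mathcomp Require Import ring lra.
Import Order.TTheory GRing.Theory Num.Theory.
Set Implicit Arguments. Unset Strict Implicit.
Local Open Scope ring_scope.

Definition code (b : bool * bool) : nat := (2 * nat_of_bool b.1 + nat_of_bool b.2)%N.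
Definition idx (q : seq nat) b := index (code b) q.
Definition nd (i j : nat) : nat := ((i - j) + (j - i))%N.
Definition extn (i j : nat) : bool := ((i == 0) && (j == 3)) || ((i == 3) && (j == 0)).
Definition xorp (u a a' : bool * bool) : bool * bool :=
  ((u.1 (+) a.1) (+) a'.1, (u.2 (+) a.2) (+) a'.2).
Definition inner q u := (idx q u == 1)%N || (idx q u == 2)%N.

Lemma check q a a' u : q \in gray_labelings -> inner q u ->
  [&& (idx q u == idx q (xorp u a a')) == (idx q a == idx q a')
    & (nd (idx q u) (idx q (xorp u a a')) ^ 2 ==
       if extn (idx q a) (idx q a') then 1 else nd (idx q a) (idx q a') ^ 2)%N].
Proof.
rewrite !inE => /or4P [] /eqP ->;
by case: a => [[] []]; case: a' => [[] []]; case: u => [[] []].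
Qed.

Section S.
Variable R : realType.

Lemma pam_eq (d : R) i j : 0 < d -> (pam d i == pam d j) = (i == j)%N.
Proof.
(move=> d0; have dn : d != 0 by rewrite gt_eqF).
rewrite /pam (inj_eq (mulIf dn)) (inj_eq (addIr _)).
have h2 : (2 : R) != 0 by rewrite pnatr_eq0.
by rewrite (inj_eq (mulfI h2)) eqr_nat.
Qed.

Lemma nd_sq i j : ((i%:R - j%:R : R) ^+ 2) = ((nd i j) ^ 2)%:R.
Proof.
rewrite /nd natrX; case: (leqP i j) => h.
  have -> : (i - j = 0)%N by apply/eqP; rewrite subn_eq0.
  by rewrite add0n natrB // -sqrrN opprB.
have -> : (j - i = 0)%N by apply/eqP; rewrite subn_eq0 ltnW.
by rewrite addn0 natrB // ltnW.
Qed.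

Lemma sqdist_pam (d : R) i j : 0 < d -> sqdist d (pam d i) (pam d j) = ((nd i j) ^ 2)%:R.
Proof.
move=> d0; rewrite -nd_sq /sqdist /pam.
have dn : d != 0 by rewrite gt_eqF.
field.
by [].
Qed.

Lemma ext_pam (d : R) i j : 0 < d -> extreme_pair d (pam d i) (pam d j) = extn i j.
Proof. by move=> d0; rewrite /extreme_pair !pam_eq. Qed.

Lemma Phi_idx q (d : R) b : Phi q d b = pam d (idx q b).
Proof. by []. Qed.

Lemma L1 q (d : R) u a a' : 0 < d -> q \in gray_labelings -> inner q u ->
  (Phi q d u != Phi q d (xorp u a a')) = (Phi q d a != Phi q d a').
Proof.
move=> d0 hq hu; have /andP [/eqP e1 _] := @check q a a' u hq hu.
by rewrite !Phi_idx !pam_eq // e1.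
Qed.

Lemma L2 q (d : R) u a a' : 0 < d -> q \in gray_labelings -> inner q u ->
  sqdist d (Phi q d u) (Phi q d (xorp u a a')) = sigma2B d (Phi q d a) (Phi q d a').
Proof.
move=> d0 hq hu; have /andP [_ /eqP e2] := @check q a a' u hq hu.
rewrite /sigma2B !Phi_idx ext_pam // !sqdist_pam // e2.
by case: ifP.
Qed.

Definition wB (d : R) u v : R := if extreme_pair d u v then 1 else 0.

Lemma sqdist_ge0 (d : R) u v : 0 <= sqdist d u v.
Proof. by rewrite /sqdist divr_ge0 ?sqr_ge0 // mulr_ge0 ?sqr_ge0. Qed.

Lemma L3 (d : R) u v : 0 < d ->
  [/\ muB d u v = sigma2B d u v + 2 * wB d u v,
      sqdist d u v = sigma2B d u v + 8 * wB d u v,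
      0 <= wB d u v & wB d u v <= sigma2B d u v].
Proof.
move=> d0; rewrite /muB /sigma2B /wB; case: ifP => h.
  split; [lra| |lra|lra].
  move: h; rewrite /extreme_pair => /orP [] /andP [/eqP -> /eqP ->];
    rewrite sqdist_pam // (_ : (nd _ _ ^ 2 = 9)%N) //; lra.
by split; rewrite ?mulr0 ?addr0 // sqdist_ge0.
Qed.
End S.

Unset Implicit Arguments.
Section S2.
Variable R : realType.

Lemma aB_le_aX N (d : R) (x xh : 'I_N -> R) : 0 < d -> aB d x xh <= aX d x xh.
Proof.
move=> d0; rewrite /aB /aX /muX /sigma2X.
set S := \sum_(k | _) sigma2B d _ _.
set W := \sum_(k | x k != xh k) wB d (x k) (xh k).
have hT : \sum_(k | x k != xh k) muB d (x k) (xh k) = S + 2 * W.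
  rewrite mulr_sumr -big_split; apply: eq_bigr => k _; by case: (@L3 _ d (x k) (xh k) d0).
have hQ : \sum_(k | x k != xh k) sqdist d (x k) (xh k) = S + 8 * W.
  rewrite mulr_sumr -big_split; apply: eq_bigr => k _; by case: (@L3 _ d (x k) (xh k) d0).
have W0 : 0 <= W by apply: sumr_ge0 => k _; case: (@L3 _ d (x k) (xh k) d0).
have WS : W <= S by apply: ler_sum => k _; case: (@L3 _ d (x k) (xh k) d0).
rewrite hT hQ.
have [S0|Sp] := eqVneq S 0.
  have -> : W = 0 by apply/le_anti; rewrite W0 -S0 WS.
  by rewrite S0 !mulr0 !addr0 sqrtr0 invr0 !mulr0.
have Sg : 0 < S by rewrite lt_neqAle eq_sym Sp /=; exact: le_trans WS.
set a := Num.sqrt S; set b := Num.sqrt (S + 8 * W).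
have ha : a ^+ 2 = S by rewrite sqr_sqrtr ?ltW.
have hb : b ^+ 2 = S + 8 * W by rewrite sqr_sqrtr //; lra.
have a0 : 0 < a by rewrite sqrtr_gt0.
have b0 : 0 < b by rewrite sqrtr_gt0; lra.
have -> : (S + 8 * W) / b = b by rewrite -hb expr2 mulfK ?gt_eqF.
rewrite ler_pdivrMr //.
have hab : 0 <= a * b by rewrite mulr_ge0 ?ltW.
have : (S + 2 * W) ^+ 2 <= (a * b) ^+ 2 by rewrite exprMn ha hb; nra.
rewrite ler_pXn2r // ?nnegrE //; lra.
Qed.
End S2.

Section S3.
Variable R : realType.

Lemma newpair N q (d : R) (z c c' : codeword N) : 0 < d -> q \in gray_labelings ->
  (forall k, inner q (z k)) ->
  (fun k => Phi q d (c k)) <> (fun k => Phi q d (c' k)) ->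
  (fun k => Phi q d (z k)) <> (fun k => Phi q d (xorp (z k) (c k) (c' k))) /\
  aX d (fun k => Phi q d (z k)) (fun k => Phi q d (xorp (z k) (c k) (c' k)))
   <= aB d (fun k => Phi q d (c k)) (fun k => Phi q d (c' k)).
Proof.
move=> d0 hq hz hne; split.
  have [k hk] : exists k, Phi q d (c k) != Phi q d (c' k).
    apply: contra_notP hne => hall; apply: funext => k.
    by apply/eqP; apply/negPn/negP => h; apply: hall; exists k.
  move=> /(congr1 (fun f => f k)) /eqP; rewrite -(L1 (c k) (c' k) d0 hq (hz k)) in hk; by rewrite (negbTE hk).
rewrite /aX /aB /muX /sigma2X.
rewrite (eq_bigl (fun k => Phi q d (c k) != Phi q d (c' k))); last by move=> k; rewrite L1.
rewrite (eq_bigr (fun k => sigma2B d (Phi q d (c k)) (Phi q d (c' k)))); last by move=> k _; rewrite L2.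
set S := \sum_(k | _) sigma2B d _ _.
apply: ler_wpM2r; first by rewrite invr_ge0 sqrtr_ge0.
apply: ler_sum => k _; case: (L3 (Phi q d (c k)) (Phi q d (c' k)) d0) => -> _ h _; lra.
Qed.
End S3.

Local Open Scope classical_set_scope.
Local Open Scope ring_scope.
Theorem corollary2 (R : realType) (d : R) (N : nat) (q : seq nat)
  (B : {set codeword N}) :
  0 < d ->
  q \in gray_labelings ->
  binary_linear B ->
  (1 < #|B|)%N ->
  (exists2 b2 : codeword N, b2 \in B & forall k, (b2 k).1 = true) ->
  (exists2 b3 : codeword N, b3 \in B & forall k, (b3 k).2 = true) ->
  loss q d B = 0.
Proof.
move=> d0 hq [h0 hlin] _ [b2 b2B hb2] [b3 b3B hb3].
have [z zB zin] : exists2 z : codeword N, z \in B & forall k, inner q (z k).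
  move: (hq); rewrite !inE => /or4P [] /eqP ->.
  - exists b3 => // k; rewrite /inner /idx /code; case: (b3 k) (hb3 k) => [[] y] /= -> //.
  - exists b2 => // k; rewrite /inner /idx /code; case: (b2 k) (hb2 k) => [x []] /= -> //.
  - by exists [ffun => (false, false)] => // k; rewrite ffunE.
  - by exists [ffun => (false, false)] => // k; rewrite ffunE.
set X := CMcode q d B.
have key : forall x xh, X x -> X xh -> x <> xh ->
    exists x', exists xh', [/\ X x', X xh', x' <> xh' & aX d x' xh' <= aB d x xh].
  move=> x xh [c cB ->] [c' c'B ->] hne.
  have [n1 n2] := @newpair _ _ q d z c c' d0 hq zin hne.
  exists (fun k => Phi q d (z k)), (fun k => Phi q d (xorp (z k) (c k) (c' k))).
  split => //; first by exists z.
  exists [ffun k => ((([ffun k => (((z k).1 (+) (c k).1), ((z k).2 (+) (c k).2))] k).1 (+) (c' k).1),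
                     (([ffun k => (((z k).1 (+) (c k).1), ((z k).2 (+) (c k).2))] k).2 (+) (c' k).2))].
    exact: (hlin _ _ (hlin _ _ zB cB) c'B).
  by apply: funext => k; rewrite !ffunE.
have aX0 : forall x xh : 'I_N -> R, 0 <= aX d x xh.
  move=> x xh; rewrite /aX divr_ge0 ?sqrtr_ge0 //; apply: sumr_ge0 => k _; exact: sqdist_ge0.
set SX := [set r | exists x xh, [/\ X x, X xh, x <> xh & r = aX d x xh]].
set SB := [set r | exists x xh, [/\ X x, X xh, x <> xh & r = aB d x xh]].
have E : min_dist X (@aX R N d) = min_dist X (@aB R N d).
  rewrite /min_dist -/SX -/SB.
  have lbX : has_lbound SX by exists 0 => r [x [xh [_ _ _ ->]]].
  have lbB : has_lbound SB.
    exists 0 => r [x [xh [Xx Xxh nx ->]]].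
    have [x' [xh' [_ _ _ h]]] := key x xh Xx Xxh nx; exact: le_trans (aX0 _ _) h.
  case: (pselect (exists r, SX r)) => [[r0 [x0 [xh0 [Xx0 Xxh0 n0 _]]]] | noX].
    apply/le_anti/andP; split.
      apply: lb_le_inf; first by exists (aB d x0 xh0), x0, xh0.
      move=> r [x [xh [Xx Xxh nx ->]]].
      have [x' [xh' [Xx' Xxh' nx' h]]] := key x xh Xx Xxh nx.
      apply: le_trans h; apply: ge_inf => //; by exists x', xh'.
    apply: lb_le_inf; first by exists (aX d x0 xh0), x0, xh0.
    move=> r [x [xh [Xx Xxh nx ->]]].
    apply: le_trans (@aB_le_aX _ _ d _ _ d0); apply: ge_inf => //; by exists x, xh.
  have eX : SX = set0 by apply/seteqP; split => // r Hr; apply: noX; exists r.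
  have eB : SB = set0.
    apply/seteqP; split => // r [x [xh [Xx Xxh nx _]]]; apply: noX.
    by exists (aX d x xh), x, xh.
  by rewrite eX eB.
rewrite /loss /= -/X E.
have [->|n0] := eqVneq (min_dist X (@aB R N d)) 0.
  by rewrite mul0r /log10 ln0 // mul0r mulr0.
by rewrite divff // /log10 ln1 mul0r mulr0.
Qed.
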